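(* Let $X$ be a connected bipartite graph with $n$ vertices and $m\ge n$ edges, and let $\{a,b\}\neq\{\alpha,\beta\}$ be edges of $X$. If $\mathbf f_{ab}$ and $\mathbf f_{\alpha\beta}$ are strongly cospectral with respect to the adjacency matrix of the line graph $\mathcal L(X)$, then $\{\{a,b\},\{\alpha,\beta\}\}$ is an edge-cut of $X$ (i.e. deleting these two edges disconnects $X$).
   Context: The line graph $\mathcal L(X)$ has vertex set $E(X)$ with edges adjacent iff they share an endpoint; $\mathbf f_{ab}$ is the vertex state of the vertex corresponding to $\{a,b\}$. For $M=\sum_\theta\theta F_\theta$ (orthogonal spectral projections), vectors $\mathbf x,\mathbf y$ are strongly cospectral if $F_\theta\mathbf x=\pm F_\theta\mathbf y$ for every eigenvalue $\theta$. *)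

(* Defs.v *)
From HB Require Import structures.
From mathcomp Require Import all_boot all_order all_algebra.
From mathcomp Require Import all_reals.
Set Implicit Arguments. Unset Strict Implicit. Unset Printing Implicit Defensive.
Import Order.TTheory GRing.Theory Num.Theory.
Local Open Scope ring_scope.

Definition simple_graph (V : finType) (adj : rel V) :=
  symmetric adj /\ irreflexive adj.

Definition connected (V : finType) (adj : rel V) :=
  forall x y : V, connect adj x y.

Definition bipartite (V : finType) (adj : rel V) :=
  exists c : V -> bool, forall x y, adj x y -> c x != c y.

Definition is_edge (V : finType) (adj : rel V) (e : {set V}) : bool :=
  [exists x, exists y, adj x y && (e == [set x; y])].

Definition edge_t (V : finType) (adj : rel V) := {e : {set V} | is_edge adj e}.

Definition nedges (V : finType) (adj : rel V) : nat := #|{: edge_t adj}|.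

Definition line_adj (R : nzRingType) (V : finType) (adj : rel V)
  : 'M[R]_(nedges adj) :=
  \matrix_(i, j)
    ((i != j) && (val (enum_val i : edge_t adj) :&: val (enum_val j : edge_t adj) != set0))%:R.

Definition lg_state (R : nzRingType) (V : finType) (adj : rel V) (e : {set V})
  : 'rV[R]_(nedges adj) :=
  \row_i (val (enum_val i : edge_t adj) == e)%:R.

(* Orthogonal projection onto the row space of a matrix M (acting on row
   vectors by right multiplication): with B a basis of the row space,
   P = B^T (B B^T)^-1 B. *)
Definition orth_proj (R : fieldType) (n : nat) (M : 'M[R]_n) : 'M[R]_n :=
  let B := row_base M in (B^T *m invmx (B *m B^T)) *m B.

Definition spec_proj (R : fieldType) (n : nat) (A : 'M[R]_n) (theta : R)
  : 'M[R]_n := orth_proj (eigenspace A theta).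

Definition strongly_cospectral (R : fieldType) (n : nat) (A : 'M[R]_n)
  (x y : 'rV[R]_n) :=
  forall theta : R, eigenvalue A theta ->
    x *m spec_proj A theta = y *m spec_proj A theta \/
    x *m spec_proj A theta = - (y *m spec_proj A theta).

Definition delete_edges (V : finType) (adj : rel V) (e1 e2 : {set V}) : rel V :=
  fun x y => adj x y && ([set x; y] != e1) && ([set x; y] != e2).

Definition edge_cut2 (V : finType) (adj : rel V) (e1 e2 : {set V}) :=
  ~ connected (delete_edges adj e1 e2).

(* Main.v *)
Require Import Defs.
From HB Require Import structures.
From mathcomp Require Import all_boot all_order all_algebra.
From mathcomp Require Import all_reals.
Import Order.TTheory GRing.Theory Num.Theory.
Set Implicit Arguments. Unset Strict Implicit.
Local Open Scope ring_scope.

Lemma selfdot0 (R : realFieldType) n (w : 'rV[R]_n) : w *m w^T = 0 -> w = 0.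
Proof.
move=> H. apply/rowP => j.
have : (w *m w^T) 0 0 = 0 by rewrite H mxE.
rewrite mxE => H2.
have pos : forall k, predT k -> 0 <= w 0 k * w^T k 0.
  by move=> k _; rewrite mxE sqr_ge0.
have H3 := @psumr_eq0P R _ predT (fun k => w 0 k * w^T k 0) pos H2 j isT.
by move: H3; rewrite !mxE => /eqP; rewrite mulf_eq0 orbb => /eqP.
Qed.

Lemma BBt_unit (R : realFieldType) r n (B : 'M[R]_(r, n)) :
  row_free B -> (B *m B^T) \in unitmx.
Proof.
move=> fB. rewrite -row_free_unit. apply: inj_row_free => v Hv.
have H1 : (v *m B) *m (v *m B)^T = 0.
  by rewrite trmx_mul mulmxA -(mulmxA v) Hv mul0mx.
have H2 := selfdot0 H1.
by apply: (row_free_inj fB); rewrite /= H2 mul0mx.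
Qed.

Lemma proj_fix_gen (R : realFieldType) r n (B : 'M[R]_(r, n)) (z : 'rV[R]_n) :
  row_free B -> (z <= B)%MS -> (B^T *m invmx (B *m B^T) *m B) *m z^T = z^T.
Proof.
move=> fB zB.
rewrite -(mulmxKpV zB); set w := z *m pinvmx B.
rewrite trmx_mul !mulmxA -(mulmxA _ B) -(mulmxA _ (B *m B^T)).
by rewrite -mulmxA (mulmxA (invmx _)) mulVmx ?mul1mx // BBt_unit.
Qed.

Lemma orth_proj_fix (R : realFieldType) n (M : 'M[R]_n) (z : 'rV[R]_n) :
  (z <= M)%MS -> orth_proj M *m z^T = z^T.
Proof.
move=> zM. rewrite /orth_proj. apply: proj_fix_gen; first exact: row_base_free.
by rewrite eq_row_base.
Qed.
Section G.
Variables (V : finType) (adj : rel V).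
Hypothesis sg : simple_graph adj.

Definition EE (i : 'I_(nedges adj)) : {set V} := val (enum_val i : edge_t adj).

Lemma EE_inj i j : EE i = EE j -> i = j.
Proof. by move/val_inj/enum_val_inj. Qed.

Lemma EE_edge i : exists x y, [/\ adj x y & EE i = [set x; y]].
Proof.
have := valP (enum_val i : edge_t adj).
by case/existsP=> x /existsP [y /andP [h /eqP e]]; exists x, y; rewrite /EE e.
Qed.

Lemma exists_idx (S : {set V}) : is_edge adj S -> exists i0, EE i0 = S.
Proof.
move=> H. exists (enum_rank (exist _ S H : edge_t adj)).
by rewrite /EE enum_rankK.
Qed.

Lemma card_EE i : #|EE i| = 2%N.
Proof.
have [x [y [h ->]]] := EE_edge i.
rewrite cards2; case: eqP => // exy; subst; by rewrite sg.2 in h.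
Qed.

Lemma card_cap i j : i != j -> (#|EE i :&: EE j| <= 1)%N.
Proof.
move=> nij; rewrite leqNgt; apply/negP => H.
have s1 : EE i :&: EE j = EE i.
  apply/eqP; rewrite eqEcard subsetIl card_EE //.
have s2 : EE i :&: EE j = EE j.
  apply/eqP; rewrite eqEcard subsetIr card_EE //.
by move: nij; rewrite (EE_inj (etrans (esym s1) s2)) eqxx.
Qed.

Lemma line_adjE (R : nzRingType) i j :
  line_adj R adj i j = (#|EE i :&: EE j|)%:R - (i == j)%:R *+ 2.
Proof.
rewrite /line_adj mxE -/(EE i) -/(EE j).
case: (eqVneq i j) => [->|nij] /=.
  by rewrite setIid card_EE subrr.
rewrite mul0rn subr0; have := card_cap nij.
case: (set_0Vmem (EE i :&: EE j)) => [->|[x xin]].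
  by rewrite eqxx cards0.
have -> : (EE i :&: EE j != set0) by apply/set0Pn; exists x.
rewrite leq_eqVlt ltnS leqn0 cards_eq0.
have -> : (EE i :&: EE j == set0) = false by apply/negP => /eqP e; rewrite e inE in xin.
by rewrite orbF => /eqP ->.
Qed.


Lemma is_edge2 x y : adj x y -> is_edge adj [set x; y].
Proof. by move=> h; apply/existsP; exists x; apply/existsP; exists y; rewrite h eqxx. Qed.

Lemma unique_sum (R : nzRingType) (S : {set V}) i0 (g : 'I_(nedges adj) -> R) :
  EE i0 = S -> \sum_i (EE i == S)%:R * g i = g i0.
Proof.
move=> e0; rewrite (bigD1 i0) //= e0 eqxx mul1r big1 ?addr0 // => i ni.
case: eqP => [e|]; last by rewrite mul0r.
by move: ni; rewrite (EE_inj (etrans e (esym e0))) eqxx.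
Qed.

Variables (R : realFieldType) (c : V -> bool).
Hypothesis cP : forall x y, adj x y -> c x != c y.

Definition sgn (x : V) : R := if c x then 1 else -1.

Lemma sgn_adj x y : adj x y -> sgn x = - sgn y.
Proof. by move/cP; rewrite /sgn; case: (c x); case: (c y); rewrite ?opprK. Qed.

Definition zvec (st : seq (V * V)) : 'rV[R]_(nedges adj) :=
  \row_i \sum_(u <- st) (EE i == [set u.1; u.2])%:R * sgn u.1.

Lemma zvec_vertex st : (forall u, u \in st -> adj u.1 u.2) ->
  perm_eq (unzip1 st) (unzip2 st) ->
  forall v, \sum_i zvec st 0 i * (v \in EE i)%:R = 0.
Proof.
move=> hst hp v.
under eq_bigr do rewrite mxE mulr_suml.
rewrite exchange_big /=.
transitivity (\sum_(u <- st) ((u.1 == v)%:R * sgn v - (u.2 == v)%:R * sgn v)).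
  rewrite big_seq_cond [RHS]big_seq_cond; apply: eq_bigr => u /andP [us _].
  have [i0 e0] := exists_idx (is_edge2 (hst u us)).
  under eq_bigr do rewrite -mulrA.
  rewrite (unique_sum _ e0) e0 !inE.
  have h := hst u us.
  case: (eqVneq u.1 v) => [e1|n1].
    have : u.2 != v by apply/eqP => e2; move: h; rewrite e1 e2 sg.2.
    by move=> /negbTE ->; rewrite e1 /= mulr1 mul1r mul0r subr0.
  rewrite /=; case: (eqVneq u.2 v) => [e2|n2].
    by rewrite -e2 /= mulr1 mul0r sub0r mul1r (sgn_adj h).
  by rewrite /= mulr0 !mul0r subr0.
rewrite sumrB -!mulr_suml.
rewrite -(big_map (fun u => u.1) predT (fun x => (x == v)%:R)).
rewrite -(big_map (fun u => u.2) predT (fun x => (x == v)%:R)).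
by rewrite (perm_big _ hp) subrr.
Qed.

Lemma zvec_eig st : (forall u, u \in st -> adj u.1 u.2) ->
  perm_eq (unzip1 st) (unzip2 st) ->
  zvec st *m line_adj R adj = (-2) *: zvec st.
Proof.
move=> hst hp; apply/rowP => j; rewrite !mxE.
under eq_bigr do rewrite line_adjE mulrBr.
rewrite sumrB.
have -> : \sum_i zvec st 0 i * ((i == j)%:R *+ 2) = zvec st 0 j *+ 2.
  rewrite (bigD1 j) //= eqxx mulrnAr mulr1 big1 ?addr0 // => i /negbTE ->.
  by rewrite mul0rn mulr0.
have -> : \sum_i zvec st 0 i * #|EE i :&: EE j|%:R = 0.
  transitivity (\sum_i \sum_(v in EE j) zvec st 0 i * (v \in EE i)%:R).
    apply: eq_bigr => i _; rewrite -mulr_sumr; congr (_ * _).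
    rewrite -sum1_card natr_sum big_mkcond /= [RHS]big_mkcond /=.
    by apply: eq_bigr => v _; rewrite inE andbC; case: (v \in EE j); case: (v \in EE i).
  rewrite exchange_big /= big1 // => v _; exact: zvec_vertex.
by rewrite sub0r mxE mulNr mulr_natl.
Qed.

End G.

Lemma path_zip (T : eqType) (e : rel T) x p : path e x p ->
  forall u, u \in zip (belast x p) p -> e u.1 u.2.
Proof.
elim: p x => [|y p IH] x //= /andP [h hp] u.
by rewrite inE => /orP [/eqP -> // | ]; exact: IH.
Qed.

Theorem mainTheorem13 (R : realType) (V : finType) (adj : rel V)
  (n m : nat) (a b alpha beta : V) :
  simple_graph adj -> connected adj -> bipartite adj ->
  #|V| = n -> nedges adj = m -> (n <= m)%N ->
  adj a b -> adj alpha beta -> [set a; b] != [set alpha; beta] ->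
  strongly_cospectral (line_adj R adj)
    (lg_state R adj [set a; b]) (lg_state R adj [set alpha; beta]) ->
  edge_cut2 adj [set a; b] [set alpha; beta].
Proof.
move=> sg _ [c cP] _ _ _ hab hab' neq SC Hc.
case/connectP: (Hc a b) => p pth lastb.
pose st := rcons (zip (belast a p) p) (b, a).
have hz := path_zip pth.
have hst : forall u, u \in st -> adj u.1 u.2.
  move=> u; rewrite mem_rcons inE => /orP [/eqP -> /= | /hz].
    by rewrite sg.1.
  by rewrite /delete_edges => /andP [/andP [] ].
have hp : perm_eq (unzip1 st) (unzip2 st).
  rewrite /unzip1 /unzip2 !map_rcons -/(unzip1 _) -/(unzip2 _).
  rewrite unzip1_zip ?size_belast // unzip2_zip ?size_belast //= lastb -lastI.
  by rewrite perm_sym perm_rcons perm_refl.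
pose z := zvec adj R c st.
have [i0 e0] := exists_idx (is_edge2 hab).
have [i1 e1] := exists_idx (is_edge2 hab').
have z0 : z 0 i0 = sgn R c b.
  rewrite mxE /st -cats1 big_cat big_seq1 /= big1_seq ?add0r.
    by rewrite e0 setUC eqxx mul1r.
  move=> u /= /hz; rewrite /delete_edges => /andP [/andP [_ h1] _].
  by rewrite e0 eq_sym (negbTE h1) mul0r.
have z1 : z 0 i1 = 0.
  rewrite mxE /st -cats1 big_cat big_seq1 /= big1_seq ?add0r.
    by rewrite e1 [[set b; a]]setUC eq_sym (negbTE neq) mul0r.
  move=> u /= /hz; rewrite /delete_edges => /andP [_ h2].
  by rewrite e1 eq_sym (negbTE h2) mul0r.
have sb : sgn R c b != 0 by rewrite /sgn; case: (c b); rewrite ?oppr_eq0 oner_eq0.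
have zeig := zvec_eig sg R cP hst hp.
have ev : eigenvalue (line_adj R adj) (-2).
  apply/eigenvalueP; exists z => //.
  by apply/negP => /eqP zz; move: sb; rewrite -z0 zz mxE eqxx.
have zin : (z <= eigenspace (line_adj R adj) (-2))%MS by apply/eigenspaceP.
have key : forall (e : {set V}) i, EE (adj:=adj) i = e ->
    (lg_state R adj e *m spec_proj (line_adj R adj) (-2) *m z^T) 0 0 = z 0 i.
  move=> e i ei; rewrite -mulmxA /spec_proj orth_proj_fix // mxE.
  apply: etrans (unique_sum (fun k => z 0 k) ei); apply: eq_bigr => k _.
  by rewrite !mxE /EE.
have k0 := key _ _ e0; have k1 := key _ _ e1.
case: (SC _ ev) => E.
  by move: sb; rewrite -z0 -k0 E k1 z1 eqxx.
by move: sb; rewrite -z0 -k0 E mulNmx mxE k1 z1 oppr0 eqxx.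
Qed.
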